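(* Let $Q=(V,E)$ be a natural join query over binary relations, and let $I$ be an instance in which every relation has at most $N\ge1$ tuples. Let $T_0=R_0^I$ for some relation $R_0\in E$. For $j=0,\dots,m-1$, let $T_{j+1}=T_j\bowtie R_j^I$, where $R_j(X_j,Y_j)\in E$ is a relation such that $X_j$ is an attribute of $T_j$ and $R_j^I$ is light in $X_j$. Let $k$ be the number of distinct attributes of $T_m$. Then $$|T_m|\le N^{k/2}\le\mathrm{AGM}(Q).$$
   Context: A natural join query over binary relations consists of relation symbols, each having exactly two distinct attributes; relations are sets of tuples. The query graph $(V,E)$ has one vertex per attribute and one edge per relation. For a relation $R$ with attribute $X$ and a value $a$, the degree is $d_R(a)=|\{t\in R:t.X=a\}|$. $R$ is light in $X$ if $d_R(a)\le\sqrt N$ for every value $a$. A fractional vertex packing is a map $u:V\to[0,1]$ with $u_x+u_y\le 1$ for every edge $\{x,y\}\in E$. Define $\mathrm{AGM}(Q)=\max_u N^{\sum_{x\in V}u_x}$, the maximum taken over fractional vertex packings $u$. *)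

(* Defs.v *)
From HB Require Import structures.
From mathcomp Require Import all_boot all_order all_algebra.
From mathcomp Require Import boolp classical_sets reals exp.
Set Implicit Arguments. Unset Strict Implicit. Unset Printing Implicit Defensive.
Import Order.TTheory GRing.Theory Num.Theory.
Local Open Scope ring_scope.

(* Query: attributes V (vertices), relation symbols Rel (edges);
   relation r has the two attributes a1 r, a2 r.
   Instance: I r : {set D * D}, the tuple (p.1, p.2) assigns p.1 to a1 r, p.2 to a2 r.
   A tuple over a schema S : {set V} is a t : {ffun V -> option D} defined exactly on S. *)

Definition tup (V D : finType) := {ffun V -> option D}.

Definition relattrs (V Rel : finType) (a1 a2 : Rel -> V) (r : Rel) : {set V} :=
  [set a1 r; a2 r].

Definition rtuples (V D Rel : finType) (a1 a2 : Rel -> V) (I : Rel -> {set D * D})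
  (r : Rel) : {set tup V D} :=
  [set t : tup V D | [exists p in I r,
     t == [ffun x => if x == a1 r then Some p.1
                     else if x == a2 r then Some p.2 else None]]].

Definition restr (V D : finType) (S : {set V}) (t : tup V D) : tup V D :=
  [ffun x => if x \in S then t x else None].

Definition dom (V D : finType) (t : tup V D) : {set V} := [set x | t x != None].

Definition njoin (V D : finType) (S : {set V}) (T : {set tup V D})
  (S' : {set V}) (U : {set tup V D}) : {set tup V D} :=
  [set t : tup V D | [&& dom t == S :|: S', restr S t \in T & restr S' t \in U]].

Definition degree (V D Rel : finType) (a1 a2 : Rel -> V) (I : Rel -> {set D * D})
  (r : Rel) (x : V) (a : D) : nat :=
  #|[set p in I r | (if x == a1 r then p.1 else p.2) == a]|.

Definition light (R : realType) (V D Rel : finType) (a1 a2 : Rel -> V)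
  (I : Rel -> {set D * D}) (N : R) (r : Rel) (x : V) : Prop :=
  forall a : D, (degree a1 a2 I r x a)%:R <= Num.sqrt N.

Fixpoint sch (V Rel : finType) (a1 a2 : Rel -> V) (r0 : Rel) (Rs : nat -> Rel)
  (j : nat) : {set V} :=
  match j with
  | 0 => relattrs a1 a2 r0
  | j'.+1 => sch a1 a2 r0 Rs j' :|: relattrs a1 a2 (Rs j')
  end.

Fixpoint Tj (V D Rel : finType) (a1 a2 : Rel -> V) (I : Rel -> {set D * D})
  (r0 : Rel) (Rs : nat -> Rel) (j : nat) : {set tup V D} :=
  match j with
  | 0 => rtuples a1 a2 I r0
  | j'.+1 => njoin (sch a1 a2 r0 Rs j') (Tj a1 a2 I r0 Rs j')
                   (relattrs a1 a2 (Rs j')) (rtuples a1 a2 I (Rs j'))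
  end.

Definition vertex_packing (R : realType) (V Rel : finType) (a1 a2 : Rel -> V)
  (u : V -> R) : Prop :=
  (forall x, 0 <= u x <= 1) /\ (forall r, u (a1 r) + u (a2 r) <= 1).

Local Open Scope classical_set_scope.
Definition AGM (R : realType) (V Rel : finType) (a1 a2 : Rel -> V) (N : R) : R :=
  sup [set N `^ (\sum_(x : V) u x) | u in [set u | vertex_packing a1 a2 u]].

(* Main.v *)
Require Import Defs.
From HB Require Import structures.
From mathcomp Require Import all_boot all_order all_algebra.
From mathcomp Require Import boolp classical_sets reals exp.
From mathcomp Require Import lra.
Import Order.TTheory GRing.Theory Num.Theory.
Local Open Scope ring_scope.

Lemma agm_part (R : realType) (V Rel : finType) (a1 a2 : Rel -> V) (N : R) (k : nat)
  (hN : 1 <= N) (hk : (k <= #|V|)%N) : N `^ (k%:R / 2) <= AGM a1 a2 N.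
Proof.
rewrite /AGM.
have hub : has_ubound [set N `^ (\sum_(x : V) u x) | u in [set u | vertex_packing a1 a2 u]]%classic.
  exists (N `^ #|V|%:R) => _ [u [hu _] <-].
  apply: ler_powR => //.
  rewrite -sum1_card natr_sum; apply: ler_sum => x _.
  by case/andP: (hu x).
have hmem : [set N `^ (\sum_(x : V) u x) | u in [set u | vertex_packing a1 a2 u]]%classic
   (N `^ (\sum_(x : V) (2^-1 : R))).
  exists (fun=> 2^-1) => //.
  split => [x|r]; first by apply/andP; split; lra.
  lra.
apply: le_trans (ub_le_sup hub hmem).
apply: ler_powR => //.
rewrite sumr_const -[X in _ <= X]mulr_natr mulrC; apply: ler_wpM2l; [by rewrite invr_ge0 | rewrite ler_nat; exact: hk].
Qed.
Section Step.
Variables (R : realType) (V D Rel : finType) (a1 a2 : Rel -> V).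
Hypothesis hdist : forall r, a1 r != a2 r.
Variables (N : R) (I : Rel -> {set D * D}).

Lemma rt_val r (t : tup V D) : t \in rtuples a1 a2 I r ->
  exists2 p, p \in I r & [/\ t (a1 r) = Some p.1, t (a2 r) = Some p.2
     & forall x, x \notin relattrs a1 a2 r -> t x = None].
Proof.
rewrite inE => /existsP [p /andP [hp /eqP ->]]; exists p => //.
have h21 : (a2 r == a1 r) = false by apply/negbTE; rewrite eq_sym hdist.
split; rewrite ?ffunE ?eqxx ?h21 //.
move=> x; rewrite ffunE !inE negb_or => /andP [/negbTE -> /negbTE ->] //.
Qed.

Lemma step (S : {set V}) (T : {set tup V D}) (r : Rel) (X : V) :
  X \in relattrs a1 a2 r -> X \in S -> light a1 a2 I N r X ->
  (#|njoin S T (relattrs a1 a2 r) (rtuples a1 a2 I r)|)%:R <=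
    (#|T|)%:R * (if relattrs a1 a2 r \subset S then 1 else Num.sqrt N).
Proof.
move=> hXR hXS hl.
set RA := relattrs a1 a2 r.
set A := njoin S T RA (rtuples a1 a2 I r).
have part : #|A| = (\sum_(s in T) #|[set t in A | restr S t == s]|)%N.
  rewrite -sum1_card (partition_big (restr S) (mem T)).
    apply: eq_bigr => s _; rewrite -sum1_card; apply: eq_bigl => t.
    by rewrite inE.
  by move=> t; rewrite inE => /and3P [].
have memA : forall t, t \in A -> [/\ dom t = S :|: RA, restr S t \in T & restr RA t \in rtuples a1 a2 I r].
  by move=> t; rewrite inE => /and3P [/eqP ? ? ?].
have outN : forall t, t \in A -> forall x, x \notin S :|: RA -> t x = None.
  move=> t /memA [hd _ _] x; rewrite -hd inE; by case: (t x).
have rS : forall (t : tup V D) (x : V), x \in S -> restr S t x = t x by move=> t x hx; rewrite ffunE hx.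
have rR : forall (t : tup V D) (x : V), x \in RA -> restr RA t x = t x by move=> t x hx; rewrite ffunE hx.
have a1R : a1 r \in RA by rewrite !inE eqxx.
have a2R : a2 r \in RA by rewrite !inE eqxx orbT.
have fib : forall s, (#|[set t in A | restr S t == s]|)%:R <=
    (if RA \subset S then 1 else Num.sqrt N) :> R.
  move=> s; case: ifP => hsub.
    rewrite -[X in _ <= X](mulr1n (1:R)) ler_nat; apply/card_le1_eqP => t t'.
    move=> /setIdP [hA /eqP hs] /setIdP [hA' /eqP hs'].
    apply/ffunP => x; case hx: (x \in S); first by rewrite -(rS t x hx) -(rS t' x hx) hs hs'.
    have hx' : x \notin S :|: RA.
      rewrite inE hx /=; apply/negP => /(fintype.subsetP hsub); by rewrite hx.
    by rewrite (outN t hA x hx') (outN t' hA' x hx').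
  set P := [set p in I r | Some (if X == a1 r then p.1 else p.2) == s X].
  have cP : (#|P|)%:R <= Num.sqrt N.
    case e: (s X) => [a|].
      have -> : P = [set p in I r | (if X == a1 r then p.1 else p.2) == a].
        apply/setP => p; rewrite !inE e (inj_eq (@Some_inj _)) //.
      exact: hl.
    have -> : P = finset.set0 by apply/setP => p; rewrite !inE e andbF.
    by rewrite cards0 sqrtr_ge0.
  apply: le_trans cP; rewrite ler_nat.
  pose f := fun t : tup V D => (t (a1 r), t (a2 r)).
  pose g := fun p : D * D => (Some p.1, Some p.2).
  rewrite -(@card_in_imset _ _ f); last first.
    move=> t t' /setIdP [hA /eqP hs] /setIdP [hA' /eqP hs'] [e1 e2].
    apply/ffunP => x; case hx: (x \in S); first by rewrite -(rS t x hx) -(rS t' x hx) hs hs'.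
    case h1: (x == a1 r); first by rewrite (eqP h1).
    case h2: (x == a2 r); first by rewrite (eqP h2).
    by rewrite (outN t hA) ?(outN t' hA') // !inE hx h1 h2.
  apply: leq_trans (leq_imset_card g P).
  apply: subset_leq_card; apply/fintype.subsetP => _ /imsetP [t ht ->].
  move: ht => /setIdP [hA /eqP hs].
  have [_ _ hR] := memA t hA.
  have [p hp [e1 e2 _]] := @rt_val r _ hR.
  rewrite rR // in e1; rewrite rR // in e2.
  apply/imsetP; exists p; last by rewrite /f /g e1 e2.
  rewrite inE hp /= -hs rS //.
  have h21 : (a2 r == a1 r) = false by apply/negbTE; rewrite eq_sym hdist.
  move: hXR; rewrite !inE => /orP [/eqP eX | /eqP eX]; rewrite eX ?eqxx ?h21 /=.
    by rewrite e1.
  by rewrite e2.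
rewrite part natr_sum.
apply: le_trans (ler_sum _ (fun s _ => fib s)) _.
by rewrite sumr_const mulrC mulr_natr.
Qed.
End Step.
Lemma base (R : realType) (V D Rel : finType) (a1 a2 : Rel -> V) (I : Rel -> {set D * D}) r :
  (#|rtuples a1 a2 I r| <= #|I r|)%N.
Proof.
apply: leq_trans (leq_imset_card (fun p : D * D => [ffun x => if x == a1 r then Some p.1
                     else if x == a2 r then Some p.2 else None] : tup V D) (I r)).
apply: subset_leq_card; apply/fintype.subsetP => t.
rewrite inE => /existsP [p /andP [hp /eqP ->]].
by apply/imsetP; exists p.
Qed.

Theorem mainTheorem4 (R : realType) (V D Rel : finType) (a1 a2 : Rel -> V)
  (hdist : forall r, a1 r != a2 r)
  (N : R) (hN : 1 <= N) (I : Rel -> {set D * D})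
  (hI : forall r, (#|I r|)%:R <= N)
  (r0 : Rel) (m : nat) (Rs : nat -> Rel) (X : nat -> V)
  (hX : forall j, (j < m)%N ->
     [/\ X j \in relattrs a1 a2 (Rs j), X j \in sch a1 a2 r0 Rs j
       & light a1 a2 I N (Rs j) (X j)]) :
  let k := #|sch a1 a2 r0 Rs m| in
  (#|Tj a1 a2 I r0 Rs m|)%:R <= N `^ (k%:R / 2) /\
  N `^ (k%:R / 2) <= AGM a1 a2 N.
Proof.
move=> k; split; last by apply: agm_part => //; apply: max_card.
have N0 : 0 <= N by lra.
have NN0 : N != 0 by apply/negP => /eqP e; move: hN; rewrite e; lra.
rewrite /k; elim: m hX {k} => [|j IH] hX.
  rewrite /= /relattrs cards2 hdist /= divff ?powRr1 ?pnatr_eq0 //.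
  by apply: le_trans (hI r0); rewrite ler_nat base.
have hXj : (j < j.+1)%N by [].
have [hXR hXS hl] := hX j hXj.
have IH' := IH (fun i hi => hX i (ltnW hi)).
rewrite /=.
apply: le_trans; first exact: (@step _ _ _ _ a1 a2 hdist N I _ (Tj a1 a2 I r0 Rs j) _ _ hXR hXS hl).
set S := sch a1 a2 r0 Rs j.
case: ifP => hsub.
  rewrite mulr1; apply: le_trans IH' _; apply: ler_powR => //.
  apply: ler_wpM2r; first by rewrite invr_ge0.
  by rewrite ler_nat subset_leq_card // finset.subsetUl.
have hprop : S \proper S :|: relattrs a1 a2 (Rs j).
  apply/properP; split; first exact: finset.subsetUl.
  have /negP/negP := negbT hsub.
  case/fintype.subsetPn => y hy hyS.
  by exists y; rewrite // inE hy orbT.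
have hc := proper_card hprop.
apply: le_trans (ler_wpM2r (sqrtr_ge0 N) IH') _.
rewrite -powR12_sqrt // -powRD; last by rewrite NN0 implybT.
apply: ler_powR => //.
have : (#|S|.+1%:R : R) <= #|S :|: relattrs a1 a2 (Rs j)|%:R by rewrite ler_nat.
rewrite -natr1; lra.
Qed.
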